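(* Let $\mathfrak{h}^s$ be a Hilbert space of dimension $d_s$ with orthonormal basis $|1\rangle,\dots,|d_s\rangle$, viewed as the fundamental representation of $\mathfrak{su}(\mathfrak{h}^s)$, and let $\hat{H}^1,\dots,\hat{H}^{d_s-1}$ be a Cartan subalgebra basis (a basis of the traceless operators diagonal in this basis). On $\bigotimes_{x=1}^N\mathfrak{h}^s_x$ let $\hat{H}^i_x$ denote $\hat{H}^i$ acting on site $x$ and $\hat{H}^i_{\mathrm{tot}}=\sum_{x=1}^N\hat{H}^i_x$. (1) Any linear operator $\hat{O}$ on $\bigotimes_{x=1}^N\mathfrak{h}^s_x$ commuting with all $\hat{H}^i_{\mathrm{tot}}$ ($1\le i\le d_s-1$) is a linear combination of operators of the form $\hat{p}\,\hat{\sigma}$, where $\hat{p}$ lies in the unital algebra generated by $\{\hat{H}^i_x:1\le i\le d_s-1,\ 1\le x\le N\}$ and $\sigma\in\mathfrak{S}_N$. (2) If $d_s=2$, then any linear operator $\hat{O}$ on $\bigotimes_{x=1}^N\mathfrak{h}^s_x$ can be written as $\hat{O}=\hat{O}_++\hat{O}_-$, where $\hat{O}_+$ is a linear combination of operators $\hat{p}\,\hat{\sigma}$ with $\hat{p}$ in the unital algebra generated by $\{\hat{\sigma}^3_x,\hat{\sigma}^+_x:1\le x\le N\}$ and $\sigma\in\mathfrak{S}_N$, and $\hat{O}_-$ is a linear combination of operators $\hat{p}\,\hat{\sigma}$ with $\hat{p}$ in the unital algebra generated by $\{\hat{\sigma}^3_x,\hat{\sigma}^-_x:1\le x\le N\}$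 and $\sigma\in\mathfrak{S}_N$.
   Context: For $\sigma\in\mathfrak{S}_N$, $\hat{\sigma}$ denotes the operator permuting tensor factors, $\hat{\sigma}\,|e_1\rangle\otimes\cdots\otimes|e_N\rangle=|e_{\sigma(1)}\rangle\otimes\cdots\otimes|e_{\sigma(N)}\rangle$. For $d_s=2$, $\hat{\sigma}^3$ is the Pauli-$z$ operator and $\hat{\sigma}^\pm$ the spin raising/lowering operators; a subscript $x$ means acting on site $x$. *)

(* Defs.v *)
From HB Require Import structures.
From mathcomp Require Import all_boot all_order all_fingroup all_algebra.
Set Implicit Arguments. Unset Strict Implicit. Unset Printing Implicit Defensive.
Import Order.TTheory GRing.Theory Num.Theory.
Local Open Scope ring_scope.

Section Defs.
Variable C : numClosedFieldType.

(* Basis configurations of the N-site chain: c x = index of the basis vector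
   at site x (sites and basis labels are 0-based). *)
Definition config (d N : nat) := {ffun 'I_N -> 'I_d}.
Definition dimT (d N : nat) := #|config d N|.
(* operators on the tensor product, as matrices in the product basis *)
Definition op (d N : nat) := 'M[C]_(dimT d N).
Definition cfg (d N : nat) (i : 'I_(dimT d N)) : config d N := enum_val i.

(* single-site operator A acting on site x *)
Definition site_op (d N : nat) (A : 'M[C]_d) (x : 'I_N) : op d N :=
  \matrix_(i, j) (A (cfg i x) (cfg j x) *
                  ([forall y : 'I_N, (y != x) ==> (cfg i y == cfg j y)] : bool)%:R).

(* sigma-hat |e_{c 1} ... e_{c N}> = |e_{c (sigma 1)} ... e_{c (sigma N)}> *)
Definition perm_op (d N : nat) (s : 'S_N) : op d N :=
  \matrix_(i, j) ((cfg i == [ffun x => cfg j (s x)]) : bool)%:R.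

Definition Htot (d N : nat) (H : 'I_d.-1 -> 'M[C]_d) (k : 'I_d.-1) : op d N :=
  \sum_(x < N) site_op (H k) x.

Definition cartan_basis (d : nat) (H : 'I_d.-1 -> 'M[C]_d) : Prop :=
  (forall k, is_diag_mx (H k) /\ \tr (H k) = 0) /\
  (forall a : 'I_d.-1 -> C, \sum_k a k *: H k = 0 -> forall k, a k = 0) /\
  (forall D : 'M[C]_d, is_diag_mx D -> \tr D = 0 ->
     exists a : 'I_d.-1 -> C, D = \sum_k a k *: H k).

Inductive in_alg_gen (n : nat) (S : 'M[C]_n -> Prop) : 'M[C]_n -> Prop :=
  | ag_gen A : S A -> in_alg_gen S A
  | ag_one : in_alg_gen S 1%:M
  | ag_add A B : in_alg_gen S A -> in_alg_gen S B -> in_alg_gen S (A + B)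
  | ag_scale (a : C) A : in_alg_gen S A -> in_alg_gen S (a *: A)
  | ag_mul A B : in_alg_gen S A -> in_alg_gen S B -> in_alg_gen S (A *m B).

Inductive in_span (n : nat) (S : 'M[C]_n -> Prop) : 'M[C]_n -> Prop :=
  | sp_zero : in_span S 0
  | sp_gen A : S A -> in_span S A
  | sp_add A B : in_span S A -> in_span S B -> in_span S (A + B)
  | sp_scale (a : C) A : in_span S A -> in_span S (a *: A).

Definition alg_perm (d N : nat) (G : op d N -> Prop) : op d N -> Prop :=
  fun M => exists (p : op d N) (s : 'S_N), in_alg_gen G p /\ M = p *m perm_op d s.

Definition cartan_gens (d N : nat) (H : 'I_d.-1 -> 'M[C]_d) : op d N -> Prop :=
  fun M => exists (k : 'I_d.-1) (x : 'I_N), M = site_op (H k) x.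

(* Pauli matrices on C^2, basis |1> = index 0, |2> = index 1 *)
Definition sigma3 : 'M[C]_2 :=
  \matrix_(i, j) (if i == j then (if i == 0 :> nat then 1 else -1) else 0).
Definition sigmap : 'M[C]_2 :=
  \matrix_(i, j) (((i == 0 :> nat) && (j == 1 :> nat)) : bool)%:R.
Definition sigmam : 'M[C]_2 :=
  \matrix_(i, j) (((i == 1 :> nat) && (j == 0 :> nat)) : bool)%:R.

Definition pm_gens (N : nat) (B : 'M[C]_2) : op 2 N -> Prop :=
  fun M => exists x : 'I_N, M = site_op sigma3 x \/ M = site_op B x.

End Defs.

(* Main.v *)
Require Import Defs.
From HB Require Import structures.
From mathcomp Require Import all_boot all_order all_fingroup all_algebra.
Set Implicit Arguments. Unset Strict Implicit. Unset Printing Implicit Defensive.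
Import Order.TTheory GRing.Theory Num.Theory.
Local Open Scope ring_scope.


Definition cnt N (T : eqType) (c : 'I_N -> T) (a : T) : nat := \sum_(x < N) (c x == a).

Lemma count_mktuple N (T : eqType) (c : 'I_N -> T) a :
  count_mem a [tuple c x | x < N] = cnt c a.
Proof.
rewrite /cnt /= count_map -sum1_count big_mkcond /= /ord_tuple /=.
by rewrite big_enum /=; apply: eq_bigr => x _; case: (c x == a).
Qed.

Lemma perm_of_counts N (T : eqType) (c c' : 'I_N -> T) :
  (forall a, cnt c a = cnt c' a) -> exists s : 'S_N, forall x, c x = c' (s x).
Proof.
move=> H.
have : perm_eq [tuple c x | x < N] [tuple c' x | x < N].
  by apply/allP => a _ /=; rewrite !count_mktuple H.
case/tuple_permP => p E; exists p => x.
have E' : [tuple c x | x < N] = [tuple tnth [tuple c' x | x < N] (p i) | i < N] by apply: val_inj.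
by have := congr1 (fun t => tnth t x) E'; rewrite !tnth_mktuple.
Qed.

Section S.
Variable C : numClosedFieldType.
Variables d N : nat.
Local Notation op := (op C d N).
Local Notation cf := (config d N).

Definition rk (c : cf) : 'I_(dimT d N) := enum_rank c.
Lemma cfgK (c : cf) : cfg (rk c) = c.
Proof. by rewrite /cfg /rk enum_rankK. Qed.
Lemma rkK (i : 'I_(dimT d N)) : rk (cfg i) = i.
Proof. by rewrite /cfg /rk enum_valK. Qed.
Lemma cfg_inj : injective (@cfg d N).
Proof. by move=> i j e; rewrite -(rkK i) -(rkK j) e. Qed.

Definition upd (c : cf) (x : 'I_N) (a : 'I_d) : cf :=
  [ffun y => if y == x then a else c y].

Lemma site_op_delta (a b : 'I_d) (x : 'I_N) (i j : 'I_(dimT d N)) :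
  site_op (delta_mx a b : 'M[C]_d) x *m delta_mx i j =
  if cfg i x == b then delta_mx (rk (upd (cfg i) x a)) j else 0.
Proof.
apply/matrixP => k l; rewrite !mxE (bigD1 i) //= big1 => [|m /negPf mi]; last first.
  by rewrite !mxE mi mulr0.
rewrite !mxE !eqxx /= addr0.
case: (cfg i x == b); last by rewrite mxE andbF !mul0r.
rewrite mxE andbT.
have -> : (k == rk (upd (cfg i) x a)) = (cfg k x == a) && [forall y, (y != x) ==> (cfg k y == cfg i y)].
  apply/idP/idP.
    move/eqP => ->; rewrite cfgK; apply/andP; split; first by rewrite ffunE eqxx.
    apply/forallP => y; apply/implyP => yx.
    by rewrite ffunE (negPf yx).
  case/andP => /eqP ka /forallP ky; apply/eqP; apply: cfg_inj; rewrite cfgK.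
  apply/ffunP => y; rewrite ffunE; case: eqP => [->//|/eqP yx].
  by apply/eqP; have := ky y; rewrite yx.
by rewrite -!natrM !mulnb.
Qed.

Definition Fs (a b : cf) (s : seq 'I_N) : op :=
  foldr (fun x M => site_op (delta_mx (a x) (b x) : 'M[C]_d) x *m M) 1%:M s.
Definition updS (c a : cf) (s : seq 'I_N) : cf := [ffun y => if y \in s then a y else c y].

Lemma Fs_delta a b s (i j : 'I_(dimT d N)) : uniq s ->
  Fs a b s *m delta_mx i j =
  if all (fun x => cfg i x == b x) s then delta_mx (rk (updS (cfg i) a s)) j else 0.
Proof.
elim: s => [|x s IH] /=.
  move=> _; rewrite mul1mx; congr delta_mx; apply: cfg_inj; rewrite cfgK.
  by apply/ffunP => y; rewrite ffunE.
case/andP => xs us; rewrite -mulmxA IH //.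
case: (all _ s); last by rewrite andbF mulmx0.
rewrite andbT site_op_delta cfgK ffunE (negPf xs).
case: (cfg i x == b x) => //; congr delta_mx; congr rk.
by apply/ffunP => y; rewrite !ffunE in_cons; case: eqP => [->|_] //=.
Qed.

Lemma one_sum_delta n : (1%:M : 'M[C]_n) = \sum_i delta_mx i i.
Proof.
rewrite {1}(matrix_sum_delta 1%:M); apply: eq_bigr => i _.
rewrite (bigD1 i) //= big1 => [|k /negPf ki]; last by rewrite mxE eq_sym ki scale0r.
by rewrite mxE eqxx scale1r addr0.
Qed.

Lemma Fs_all a b : Fs a b (enum 'I_N) = delta_mx (rk a) (rk b).
Proof.
rewrite -[LHS]mulmx1 one_sum_delta mulmx_sumr (bigD1 (rk b)) //= big1 => [|i ib].
  rewrite Fs_delta ?enum_uniq // cfgK.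
  have -> : all (fun x => b x == b x) (enum 'I_N) by apply/allP => x _.
  rewrite addr0; congr delta_mx; congr rk; apply/ffunP => y; by rewrite ffunE mem_enum.
rewrite Fs_delta ?enum_uniq //; case: ifP => // /allP H; exfalso.
move/eqP: ib; apply; rewrite -[i]rkK; congr rk; apply/ffunP => y.
by apply/eqP; apply: H; rewrite mem_enum.
Qed.

Lemma site_opD (A B : 'M[C]_d) x : site_op (A + B) x = site_op A x + site_op B x :> op.
Proof. by apply/matrixP => i j; rewrite !mxE mulrDl. Qed.
Lemma site_opZ (a : C) (A : 'M[C]_d) x : site_op (a *: A) x = a *: site_op A x :> op.
Proof. by apply/matrixP => i j; rewrite !mxE mulrA. Qed.
Lemma site_op0 x : site_op (0 : 'M[C]_d) x = 0 :> op.
Proof. by apply/matrixP => i j; rewrite !mxE mul0r. Qed.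
Lemma site_op_sum (I : Type) (r : seq I) (F : I -> 'M[C]_d) x :
  site_op (\sum_(k <- r) F k) x = \sum_(k <- r) site_op (F k) x :> op.
Proof.
elim: r => [|k r IH]; first by rewrite !big_nil site_op0.
by rewrite !big_cons site_opD IH.
Qed.
Lemma site_op1 x : site_op (1%:M : 'M[C]_d) x = 1%:M :> op.
Proof.
apply/matrixP => i j; rewrite !mxE -natrM mulnb; congr (_%:R); congr (nat_of_bool _).
apply/idP/idP.
  case/andP => /eqP e /forallP H; apply/eqP/cfg_inj/ffunP => y.
  case: (eqVneq y x) => [->//|yx]; by apply/eqP; have := H y; rewrite yx.
move/eqP => ->; rewrite eqxx /=; apply/forallP => y; apply/implyP => _; exact: eqxx.
Qed.

Lemma Fs_alg (G : op -> Prop) (a b : cf) s :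
  (forall x, in_alg_gen G (site_op (delta_mx (a x) (b x) : 'M[C]_d) x)) ->
  in_alg_gen G (Fs a b s).
Proof.
move=> H; elim: s => [|x s IH] /=; first exact: ag_one.
exact: ag_mul.
Qed.
Lemma delta_perm (s : 'S_N) (i j m : 'I_(dimT d N)) :
  cfg m = [ffun x => cfg j (s x)] -> delta_mx i m *m perm_op C d s = delta_mx i j.
Proof.
move=> hm; apply/matrixP => k l; rewrite !mxE (bigD1 m) //= big1 => [|q /negPf qm]; last first.
  by rewrite !mxE qm andbF mul0r.
rewrite !mxE !eqxx andbT addr0 hm -natrM mulnb.
have -> : ([ffun x => cfg j (s x)] == [ffun x => cfg l (s x)]) = (l == j); last by [].
apply/eqP/eqP => [E|->//]; apply: cfg_inj; apply/ffunP => y.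
by have := congr1 (fun f : cf => f (s^-1 y)%g) E; rewrite !ffunE permKV => ->.
Qed.

Lemma alg_perm_delta (G : op -> Prop) (i j m : 'I_(dimT d N)) (s : 'S_N) :
  cfg m = [ffun x => cfg j (s x)] -> in_alg_gen G (delta_mx i m) ->
  alg_perm G (delta_mx i j).
Proof. by move=> hm hG; exists (delta_mx i m), s; split => //; rewrite (delta_perm i hm). Qed.

Lemma delta_Fs (i j : 'I_(dimT d N)) : delta_mx i j = Fs (cfg i) (cfg j) (enum 'I_N).
Proof. by rewrite Fs_all !rkK. Qed.

Lemma site_op_diag (A : 'M[C]_d) x (i j : 'I_(dimT d N)) :
  is_diag_mx A -> i != j -> site_op A x i j = 0.
Proof.
move=> /is_diag_mxP hA ij; rewrite mxE.
case: (eqVneq (cfg i x) (cfg j x)) => [e|ne]; last by rewrite hA ?mul0r // val_eqE.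
suff -> : [forall y, (y != x) ==> (cfg i y == cfg j y)] = false by rewrite mulr0.
apply/negP => /forallP hy; move/eqP: ij; apply; apply: cfg_inj; apply/ffunP => y.
case: (eqVneq y x) => [->//|yx]; by apply/eqP; have := hy y; rewrite yx.
Qed.

Lemma site_op_ii (A : 'M[C]_d) x (i : 'I_(dimT d N)) : site_op A x i i = A (cfg i x) (cfg i x).
Proof.
rewrite mxE; suff -> : [forall y, (y != x) ==> (cfg i y == cfg i y)] by rewrite mulr1.
by apply/forallP => y; apply/implyP => _.
Qed.
End S.

Lemma span_sum (C : numClosedFieldType) n (S : 'M[C]_n -> Prop) (I : Type) (r : seq I) (P : pred I) F :
  (forall i, P i -> in_span S (F i)) -> in_span S (\sum_(i <- r | P i) F i).
Proof. by move=> H; apply: big_ind => //; [exact: sp_zero | exact: sp_add]. Qed.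

Lemma alg_sum (C : numClosedFieldType) n (S : 'M[C]_n -> Prop) (I : Type) (r : seq I) (P : pred I) F :
  (forall i, P i -> in_alg_gen S (F i)) -> in_alg_gen S (\sum_(i <- r | P i) F i).
Proof.
move=> H; apply: big_ind => //; last exact: ag_add.
by rewrite -(scale0r (1%:M : 'M[C]_n)); apply: ag_scale; apply: ag_one.
Qed.


Section P1.
Variable C : numClosedFieldType.
Variables d N : nat.
Variable H : 'I_d.-1 -> 'M[C]_d.
Hypothesis cb : cartan_basis H.

Definition Dm (a : 'I_d) : 'M[C]_d := delta_mx a a - (d%:R)^-1 *: 1%:M.

Lemma d_neq0 (a : 'I_d) : (d%:R : C) != 0.
Proof. by rewrite pnatr_eq0 -lt0n; apply: leq_ltn_trans (ltn_ord a). Qed.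

Lemma Dm_span a : exists al : 'I_d.-1 -> C, Dm a = \sum_k al k *: H k.
Proof.
case: cb => _ [_ h]; apply: h.
  apply/is_diag_mxP => p q pq; rewrite !mxE.
  have /negPf -> : p != q by rewrite -val_eqE.
  case pa: (p == a); case qa: (q == a); rewrite /= ?mulr0 ?subrr //.
  by move/eqP: pa => pa; move/eqP: qa => qa; rewrite pa qa eqxx in pq.
rewrite /Dm mxtraceD raddfN /= mxtraceZ mxtrace1 mulVf ?d_neq0 //.
rewrite /mxtrace (bigD1 a) //= big1 => [|p /negPf pa]; last by rewrite mxE pa.
by rewrite mxE eqxx addr0 subrr.
Qed.

Lemma site_delta_alg (a : 'I_d) (x : 'I_N) :
  in_alg_gen (@cartan_gens C d N H) (site_op (delta_mx a a : 'M[C]_d) x).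
Proof.
have -> : (delta_mx a a : 'M[C]_d) = Dm a + (d%:R)^-1 *: 1%:M by rewrite /Dm subrK.
rewrite site_opD site_opZ site_op1; apply: ag_add; last by apply: ag_scale; apply: ag_one.
case: (Dm_span a) => al ->; rewrite site_op_sum; apply: alg_sum => k _.
by rewrite site_opZ; apply: ag_scale; apply: ag_gen; exists k, x.
Qed.

Definition hh (c : config d N) (A : 'M[C]_d) : C := \sum_(x < N) A (c x) (c x).

Lemma hh_lin c (al : 'I_d.-1 -> C) : hh c (\sum_k al k *: H k) = \sum_k al k * hh c (H k).
Proof.
rewrite /hh; under eq_bigr do rewrite summxE; rewrite exchange_big; apply: eq_bigr => k _.
by rewrite mulr_sumr; apply: eq_bigr => x _; rewrite mxE.
Qed.

Lemma hh_Dm c a : hh c (Dm a) = (cnt c a)%:R - N%:R / d%:R.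
Proof.
rewrite /hh /cnt natr_sum -[N in N%:R]card_ord -sum1_card natr_sum mulr_suml -sumrB.
by apply: eq_bigr => x _; rewrite !mxE eqxx andbb mulr1 mul1r.
Qed.

Lemma Htot_ii k (i : 'I_(dimT d N)) : Htot N H k i i = hh (cfg i) (H k).
Proof. by rewrite /Htot summxE; apply: eq_bigr => x _; rewrite site_op_ii. Qed.

Lemma Htot_ij k (i j : 'I_(dimT d N)) : i != j -> Htot N H k i j = 0.
Proof.
move=> ij; rewrite /Htot summxE big1 // => x _; apply: site_op_diag ij.
by case: cb => /(_ k) [].
Qed.

Lemma part1 (O : op C d N) :
  (forall k : 'I_d.-1, O *m Htot N H k = Htot N H k *m O) ->
  in_span (alg_perm (@cartan_gens C d N H)) O.
Proof.
move=> hc; rewrite (matrix_sum_delta O); apply: span_sum => i _; apply: span_sum => j _.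
have [->|nz] := eqVneq (O i j) 0; first by rewrite scale0r; apply: sp_zero.
apply: sp_scale; apply: sp_gen.
have eqh k : hh (cfg i) (H k) = hh (cfg j) (H k).
  have := congr1 (fun M : op C d N => M i j) (hc k); rewrite !mxE.
  rewrite (bigD1 j) //= big1 => [|m /negPf mj]; last by rewrite Htot_ij ?mulr0 // mj.
  rewrite (bigD1 i) //= big1 => [|m /negPf mi]; last by rewrite Htot_ij ?mul0r // eq_sym mi.
  rewrite !addr0 !Htot_ii mulrC => /eqP; rewrite -subr_eq0 -mulrBl mulf_eq0 (negPf nz) orbF.
  by rewrite subr_eq0 => /eqP.
have ec a : cnt (cfg i) a = cnt (cfg j) a.
  apply/eqP; rewrite -(eqr_nat C); apply/eqP.
  have := hh_Dm (cfg i) a; have := hh_Dm (cfg j) a; case: (Dm_span a) => al ->.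
  rewrite !hh_lin (eq_bigr _ (fun k _ => congr1 (fun t => al k * t) (eqh k))) => -> /eqP.
  by rewrite eq_sym subr_eq subrK => /eqP.
case: (perm_of_counts ec) => s hs.
apply: (@alg_perm_delta C d N _ i j i s).
  by apply/ffunP => x; rewrite ffunE hs.
rewrite delta_Fs; apply: Fs_alg => x; exact: site_delta_alg.
Qed.
End P1.

Section P2.
Variable C : numClosedFieldType.

Lemma ord2_cases (a : 'I_2) : a = ord0 \/ a = ord_max.
Proof. by case: a => [[|[|]]] // p; [left|right]; apply: val_inj. Qed.

Lemma two_neq0 : (2%:R : C) != 0. Proof. by rewrite pnatr_eq0. Qed.

Lemma delta00 : (delta_mx ord0 ord0 : 'M[C]_2) = 2%:R^-1 *: (1%:M + sigma3 C).
Proof.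
apply/matrixP => i j; rewrite !mxE.
case: (ord2_cases i) => ->; case: (ord2_cases j) => -> /=; rewrite ?mulr0 ?subrr ?addr0 ?mulr0 //.
by rewrite mulVf ?two_neq0.
Qed.

Lemma delta11 : (delta_mx ord_max ord_max : 'M[C]_2) = 2%:R^-1 *: (1%:M + (-1) *: sigma3 C).
Proof.
apply/matrixP => i j; rewrite !mxE.
case: (ord2_cases i) => ->; case: (ord2_cases j) => -> /=; rewrite ?mulr0 ?subrr ?addr0 ?mulrN1 ?opprK ?subrr ?mulr0 //.
  by rewrite mulr1 subrr mulr0.
by rewrite mulVf ?two_neq0.
Qed.

Lemma deltap : (delta_mx ord0 ord_max : 'M[C]_2) = sigmap C.
Proof.
by apply/matrixP => i j; rewrite !mxE; case: (ord2_cases i) => ->; case: (ord2_cases j) => ->.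
Qed.

Lemma deltam : (delta_mx ord_max ord0 : 'M[C]_2) = sigmam C.
Proof.
by apply/matrixP => i j; rewrite !mxE; case: (ord2_cases i) => ->; case: (ord2_cases j) => ->.
Qed.
End P2.

Section P3.
Variable C : numClosedFieldType.
Variable N : nat.

Lemma site_pm (B : 'M[C]_2) x (a b : 'I_2) :
  a = b \/ delta_mx a b = B -> in_alg_gen (@pm_gens C N B) (site_op (delta_mx a b : 'M[C]_2) x).
Proof.
case=> [<-|<-]; last by apply: ag_gen; exists x; right.
case: (ord2_cases a) => ->; [rewrite delta00 | rewrite delta11];
  rewrite site_opZ site_opD site_op1 ?site_opZ; apply: ag_scale; apply: ag_add;
  try apply: ag_one; try apply: ag_scale; by apply: ag_gen; exists x; left.
Qed.

Lemma Fs_pm (B : 'M[C]_2) (c c' : config 2 N) :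
  (forall x, c x = c' x \/ delta_mx (c x) (c' x) = B) ->
  in_alg_gen (@pm_gens C N B) (Fs C c c' (enum 'I_N)).
Proof. by move=> h; apply: Fs_alg => x; apply: site_pm. Qed.

Definition srt (k : nat) : 'I_N -> 'I_2 := fun x => if (N - k <= x)%N then ord_max else ord0.

Lemma cnt01 (c : 'I_N -> 'I_2) : (cnt c ord0 + cnt c ord_max = N)%N.
Proof.
rewrite /cnt -big_split /= -[RHS]card_ord -sum1_card; apply: eq_bigr => x _.
by case: (ord2_cases (c x)) => ->.
Qed.

Lemma cnt_srt k : (k <= N)%N -> cnt (srt k) ord_max = k.
Proof.
move=> kN; rewrite /cnt /srt.
have -> : (\sum_(x < N) (((if (N - k <= x)%N then ord_max else ord0) == (ord_max : 'I_2)) : nat)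
          = \sum_(x < N) ((N - k <= x)%N : nat))%N by apply: eq_bigr => x _; case: ifP.
rewrite -(big_mkord xpredT (fun x => ((N - k <= x)%N : nat))).
rewrite (big_cat_nat (leq0n (N - k)) (leq_subr k N)) /=.
rewrite big_nat_cond big1 => [|x /andP [/andP [_ h] _]]; last by rewrite leqNgt h.
rewrite add0n big_nat_cond (eq_bigr (fun _ => 1%N)) => [|x /andP [/andP [h _] _]]; last by rewrite h.
by rewrite -big_nat_cond sum_nat_const_nat muln1 subKn.
Qed.

Lemma cnt_le (c : 'I_N -> 'I_2) : (cnt c ord_max <= N)%N.
Proof. by rewrite -{2}(cnt01 c) leq_addl. Qed.

Lemma srt_perm (c : 'I_N -> 'I_2) : exists t : 'S_N, forall x, c x = srt (cnt c ord_max) (t x).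
Proof.
apply: perm_of_counts => a.
have h1 := cnt_srt (cnt_le c); have h2 := cnt01 c; have h3 := cnt01 (srt (cnt c ord_max)).
case: (ord2_cases a) => ->; last by rewrite h1.
by apply/eqP; rewrite -(eqn_add2r (cnt c ord_max)) h2 -{2}h1 h3.
Qed.

Lemma compare_exists (c c' : 'I_N -> 'I_2) :
  (exists s : 'S_N, forall x, (c x <= c' (s x))%N) \/
  (exists s : 'S_N, forall x, (c' (s x) <= c x)%N).
Proof.
case: (srt_perm c) => t ht; case: (srt_perm c') => t' ht'.
set k := cnt c ord_max; set k' := cnt c' ord_max.
have key : forall x, c' ((t * t'^-1)%g x) = srt k' (t x).
  by move=> x; rewrite ht' permM permKV.
have mono : forall k1 k2 y, (k1 <= k2)%N -> (srt k1 y <= srt k2 y)%N.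
  move=> k1 k2 y h; rewrite /srt; case: ifP => h1; case: ifP => h2 //.
  by move: h2; rewrite (leq_trans _ h1) // leq_sub2l.
case: (leqP k k') => h; [left|right]; exists (t * t'^-1)%g => x; rewrite key ht.
  exact: mono.
by apply: mono; apply: ltnW.
Qed.
End P3.

Lemma le2_cases (a b : 'I_2) : (a <= b)%N -> a = b \/ (a = ord0 /\ b = ord_max).
Proof.
by case: (ord2_cases a) => ->; case: (ord2_cases b) => -> //; [left|right|left].
Qed.

Lemma part2 (C : numClosedFieldType) (N : nat) (O : op C 2 N) :
  exists Op Om : op C 2 N,
    O = Op + Om /\
    in_span (alg_perm (@pm_gens C N (sigmap C))) Op /\
    in_span (alg_perm (@pm_gens C N (sigmam C))) Om.
Proof.
pose P (i j : 'I_(dimT 2 N)) : bool := [exists s : 'S_N, [forall x, (cfg i x <= cfg j (s x))%N]].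
exists (\sum_i \sum_j (if P i j then O i j *: delta_mx i j else 0)).
exists (\sum_i \sum_j (if P i j then 0 else O i j *: delta_mx i j)).
split.
  rewrite {1}(matrix_sum_delta O) -big_split; apply: eq_bigr => i _.
  rewrite -big_split; apply: eq_bigr => j _; by case: (P i j) => /=; rewrite ?addr0 ?add0r.
split; apply: span_sum => i _; apply: span_sum => j _.
  case: ifP => hP; last exact: sp_zero.
  apply: sp_scale; apply: sp_gen.
  case/existsP: hP => s /forallP h.
  apply: (@alg_perm_delta C 2 N _ i j (rk [ffun x => cfg j (s x)]) s); first by rewrite cfgK.
  rewrite delta_Fs; apply: Fs_pm => x; rewrite cfgK ffunE.
  case: (le2_cases (h x)) => [->|[-> ->]]; [by left | by right; rewrite deltap].
case: ifP => hP; first exact: sp_zero.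
apply: sp_scale; apply: sp_gen.
case: (compare_exists (cfg i) (cfg j)) => [[s hs]|[s hs]].
  exfalso; move/negbT/negP: hP; apply; apply/existsP; exists s; exact/forallP.
apply: (@alg_perm_delta C 2 N _ i j (rk [ffun x => cfg j (s x)]) s); first by rewrite cfgK.
rewrite delta_Fs; apply: Fs_pm => x; rewrite cfgK ffunE.
case: (le2_cases (hs x)) => [->|[-> ->]]; [by left | by right; rewrite deltam].
Qed.

Theorem lemma6p1 (C : numClosedFieldType) :
  (forall (d N : nat) (H : 'I_d.-1 -> 'M[C]_d), cartan_basis H ->
     forall O : op C d N,
       (forall k : 'I_d.-1, O *m Htot N H k = Htot N H k *m O) ->
       in_span (alg_perm (@cartan_gens C d N H)) O)
  /\
  (forall (N : nat) (O : op C 2 N),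
     exists Op Om : op C 2 N,
       O = Op + Om /\
       in_span (alg_perm (@pm_gens C N (sigmap C))) Op /\
       in_span (alg_perm (@pm_gens C N (sigmam C))) Om).
Proof.
split; [move=> d N H cb O hc; exact: part1 | exact: part2].
Qed.
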